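(* Let $k$ be a field, $A=kQ_A/I_A$ a monomial algebra with vertices $e_1,\dots,e_n$, and $B$ the algebra obtained from $A$ by gluing the distinct non-isolated vertices $e_1,e_n$. Then $$\dim_k\mathrm{Im}(\delta^0_A)=\dim_k\mathrm{Im}(\delta^0_B)+1+c_B-c_A-\mathrm{sp}(1,n).$$ In particular, if $e_1,e_n$ lie in the same block of $A$, then $\dim_k\mathrm{Im}(\delta^0_A)=\dim_k\mathrm{Im}(\delta^0_B)+1-\mathrm{sp}(1,n)$; if they lie in different blocks, then $\dim_k\mathrm{Im}(\delta^0_A)=\dim_k\mathrm{Im}(\delta^0_B)$.
   Context: Monomial algebra: $A=kQ_A/I_A$, $Q_A$ finite quiver, $I_A$ admissible, generated by a minimal set $Z_A$ of paths of length $\ge2$; $\mathcal B_A$: paths (including trivial ones) avoiding $Z_A$ as subpaths, a basis of $A$. Gluing: $B\subseteq A$ generated by $f_1=e_1+e_n$, $f_i=e_i$ ($2\le i\le n-1$) and all arrows; $B\cong kQ_B/I_B$, $Q_B$ obtained from $Q_A$ by identifying $e_1,e_n$ to $f_1$ (arrow $\alpha\mapsto\alpha^*$, path $p=a_m\cdots a_1\mapsto p^*=a_m^*\cdots a_1^*$), $I_B$ generated by $\{r^*:r\in Z_A\}$ and the paths $b^*c^*$ with $b,c$ arrows, $t(c),s(b)\in\{e_1,e_n\}$, $t(c)\ne s(b)$; $\mathcal B_B$ its basis paths. $c_A,c_B$: numbers of connected components of $Q_A,Q_B$; blocks correspond to connected components. For path sets $X,Y$, $k(X\|Y)$ has basis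 the pairs $x\|y$ of parallel paths. For monomial $\Lambda=kQ/\langle Z\rangle$ with basis paths $\mathcal B$, $\delta^0:k(Q_0\|\mathcal B)\to k(Q_1\|\mathcal B)$, $e\|\gamma\mapsto\sum_{a\in Q_1,s(a)=e,a\gamma\in\mathcal B}a\|a\gamma-\sum_{a\in Q_1,t(a)=e,\gamma a\in\mathcal B}a\|\gamma a$; $\delta^0_A,\delta^0_B$ are these for $A,B$. A special path is a path $p\in\mathcal B_A$ from $e_1$ to $e_n$ or from $e_n$ to $e_1$ with $\delta^0_B(f_1\|p^* )\ne0$, equivalently such that $ap\notin I_A$ or $pa\notin I_A$ for some arrow $a$; $\mathrm{sp}(1,n)$ is the number of special paths. *)

(* Defs.v *)
From HB Require Import structures.
From mathcomp Require Import all_boot all_order all_algebra.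
Set Implicit Arguments. Unset Strict Implicit. Unset Printing Implicit Defensive.
Import GRing.Theory.

(* A finite quiver is given by a finite type of vertices V, a predicate Q0
   selecting the actual vertex set, a finite type of arrows E and
   source/target maps s t : E -> V.
   A path is a pair (v, w) : V * seq E where v is its source and
   w = [:: a_1; ...; a_m] lists its arrows IN TRAVERSAL ORDER
   (so it is the path a_m ... a_1 in the paper's notation);
   (v, [::]) is the trivial path e_v. *)

Section Quiver.
Variables (V E : finType) (s t : E -> V).

Fixpoint chain (x : V) (w : seq E) : bool :=
  if w is a :: w' then (s a == x) && chain (t a) w' else true.

Definition src (p : V * seq E) : V := p.1.
Definition tgt (p : V * seq E) : V := last p.1 (map t p.2).

Definition valid (Q0 : pred V) (p : V * seq E) : bool :=
  (p.1 \in Q0) && chain p.1 p.2.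

Definition word_path (w : seq E) : bool :=
  if w is a :: _ then chain (s a) w else false.

Definition avoids (Z : seq (seq E)) (w : seq E) : bool :=
  all (fun r => ~~ infix r w) Z.

(* basis paths B of the monomial algebra kQ/<Z> *)
Definition basisp (Q0 : pred V) (Z : seq (seq E)) (p : V * seq E) : bool :=
  valid Q0 p && avoids Z p.2.

Definition monomial_relations (Z : seq (seq E)) : Prop :=
  (forall r, r \in Z -> (2 <= size r)%N /\ word_path r) /\
  (forall r r', r \in Z -> r' \in Z -> infix r r' -> r = r').

Definition bounded (Q0 : pred V) (Z : seq (seq E)) (N : nat) : Prop :=
  forall p, valid Q0 p -> (N < size p.2)%N -> ~~ avoids Z p.2.

Fixpoint words (N : nat) : seq (seq E) :=
  if N is N'.+1 then [::] :: [seq a :: w | a <- enum E, w <- words N']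
  else [:: [::]].

(* basis paths of length <= N (all basis paths when N is a bound) *)
Definition basis_list (Q0 : pred V) (Z : seq (seq E)) (N : nat) :=
  [seq p <- [seq (v, w) | v <- enum V, w <- words N] | basisp Q0 Z p].

(* basis of k(Q0 || B): e || gamma, gamma a basis path from e to e
   (represented by gamma) *)
Definition dom_list Q0 Z N :=
  [seq g <- basis_list Q0 Z N | tgt g == src g].

(* basis of k(Q1 || B): a || p with p a basis path parallel to a *)
Definition codom_list Q0 Z N :=
  [seq (a, p) | a <- enum E,
     p <- [seq q <- basis_list Q0 Z N | (src q == s a) && (tgt q == t a)]].

(* coefficient of a || p in delta^0(e || gamma), e = src gamma:
   + [a gamma = p] (s(a) = e) - [gamma a = p] (t(a) = e).
   Here "a gamma" (gamma then a) is (src gamma, rcons gamma a) and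
   "gamma a" (a then gamma) is (s a, a :: gamma). The conditions
   a gamma \in B, gamma a \in B are automatic since p is a basis path. *)
Definition coef (k : fieldType) (g : V * seq E) (ap : E * (V * seq E)) : k :=
  ((s ap.1 == src g) && (ap.2 == (src g, rcons g.2 ap.1)))%:R
  - ((t ap.1 == src g) && (ap.2 == (s ap.1, ap.1 :: g.2)))%:R.

Definition delta0_mx (k : fieldType) Q0 Z N :
  'M[k]_(size (dom_list Q0 Z N), size (codom_list Q0 Z N)) :=
  \matrix_(i, j) coef k (tnth (in_tuple (dom_list Q0 Z N)) i)
                        (tnth (in_tuple (codom_list Q0 Z N)) j).

Definition dimIm_delta0 (k : fieldType) Q0 Z N : nat :=
  \rank (delta0_mx k Q0 Z N).

Definition adj : rel V :=
  fun u v => [exists a, ((s a == u) && (t a == v)) || ((s a == v) && (t a == u))].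

Definition ncomp (Q0 : pred V) : nat := n_comp adj Q0.

Definition non_isolated (v : V) : Prop := exists a, (s a == v) || (t a == v).

End Quiver.

Section Gluing.
Variables (V E : finType) (s t : E -> V) (Z : seq (seq E)) (v1 vn : V).

Definition glue (v : V) : V := if v == vn then v1 else v.
Definition sB (a : E) : V := glue (s a).
Definition tB (a : E) : V := glue (t a).
(* vertices of Q_B: all except vn (vn is identified with v1 = f_1) *)
Definition Q0B : pred V := predC1 vn.
Definition Q0A : pred V := predT.

(* generators of I_B: the r^star and the b^star c^star (c first, then b) with
   t(c), s(b) in {v1, vn}, t(c) <> s(b) *)
Definition ZB : seq (seq E) :=
  Z ++ [seq [:: c; b] | c <- enum E,
          b <- [seq b <- enum E | (t c \in [:: v1; vn]) && (s b \in [:: v1; vn])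
                                  && (t c != s b)]].

(* special paths: p in B_A from v1 to vn or from vn to v1 with
   delta^0_B (f_1 || p^star) <> 0 *)
Definition special (k : fieldType) (N : nat) (p : V * seq E) : bool :=
  basisp s t Q0A Z p &&
  (((src p == v1) && (tgt t p == vn)) || ((src p == vn) && (tgt t p == v1))) &&
  has (fun ap => coef sB tB k (v1, p.2) ap != 0%R) (codom_list sB tB Q0B ZB N).

Definition sp (k : fieldType) (N : nat) : nat :=
  count (special k N) (basis_list s t Q0A Z N).

End Gluing.

(* Main.v *)
From Pilot Require Import Defs.
From HB Require Import structures.
From mathcomp Require Import all_boot all_order all_algebra zify.
Set Implicit Arguments. Unset Strict Implicit. Unset Printing Implicit Defensive.
Import GRing.Theory.

Module PilotAux.
Local Open Scope ring_scope.

Section Frame.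
Variable k : fieldType.

Definition Mx (X Y : Type) (f : X -> Y -> k) (r : seq X) (c : seq Y) :
  'M[k]_(size r, size c) :=
  \matrix_(i, j) f (tnth (in_tuple r) i) (tnth (in_tuple c) j).

Definition rowv (X Y : Type) (f : X -> Y -> k) (c : seq Y) (x : X) : 'rV[k]_(size c) :=
  \row_j f x (tnth (in_tuple c) j).

Lemma row_Mx (X Y : Type) (f : X -> Y -> k) r c i :
  row i (Mx f r c) = rowv f c (tnth (in_tuple r) i).
Proof. by apply/rowP => j; rewrite !mxE. Qed.

Lemma rowv_sub (X : eqType) (Y : Type) (f : X -> Y -> k) r c x :
  x \in r -> (rowv f c x <= Mx f r c)%MS.
Proof.
move=> xr; have /tnthP [i ->] : x \in in_tuple r by [].
by rewrite -row_Mx row_sub.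
Qed.

Lemma tr_Mx (X Y : Type) (f : X -> Y -> k) r c :
  (Mx f r c)^T = Mx (fun y x => f x y) c r.
Proof. by apply/matrixP => i j; rewrite !mxE. Qed.

Lemma Mx_subr (X X' : eqType) (Y : Type) (f : X -> Y -> k) (f' : X' -> Y -> k)
   r r' c :
  (forall x, x \in r -> (forall j, f x (tnth (in_tuple c) j) = 0) \/
       exists2 x', x' \in r' & forall j, f x (tnth (in_tuple c) j) = f' x' (tnth (in_tuple c) j)) ->
  (Mx f r c <= Mx f' r' c)%MS.
Proof.
move=> H; apply/row_subP => i; rewrite row_Mx.
case: (H _ (mem_tnth i (in_tuple r))) => [z | [x' x'r e]].
  suff -> : rowv f c (tnth (in_tuple r) i) = 0 by rewrite sub0mx.
  by apply/rowP => j; rewrite !mxE z.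
have -> : rowv f c (tnth (in_tuple r) i) = rowv f' c x'.
  by apply/rowP => j; rewrite !mxE e.
exact: rowv_sub.
Qed.

Lemma rank_rows (X X' Y : eqType) (f : X -> Y -> k) (f' : X' -> Y -> k)
   r r' c :
  (forall x, x \in r -> (forall y, y \in c -> f x y = 0) \/
       exists2 x', x' \in r' & forall y, y \in c -> f x y = f' x' y) ->
  (forall x', x' \in r' -> (forall y, y \in c -> f' x' y = 0) \/
       exists2 x, x \in r & forall y, y \in c -> f' x' y = f x y) ->
  \rank (Mx f r c) = \rank (Mx f' r' c).
Proof.
move=> H1 H2; apply/eqP; rewrite eqn_leq; apply/andP; split; apply: mxrankS.
  apply: Mx_subr => x /H1 [z|[x' h e]]; [left=> j; apply: z; exact: mem_tnth|].
  by right; exists x' => // j; apply: e; exact: mem_tnth.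
apply: Mx_subr => x /H2 [z|[x' h e]]; [left=> j; apply: z; exact: mem_tnth|].
by right; exists x' => // j; apply: e; exact: mem_tnth.
Qed.

Lemma rank_cols (X Y Y' : eqType) (f : X -> Y -> k) (f' : X -> Y' -> k)
   r c c' :
  (forall y, y \in c -> (forall x, x \in r -> f x y = 0) \/
       exists2 y', y' \in c' & forall x, x \in r -> f x y = f' x y') ->
  (forall y', y' \in c' -> (forall x, x \in r -> f' x y' = 0) \/
       exists2 y, y \in c & forall x, x \in r -> f' x y' = f x y) ->
  \rank (Mx f r c) = \rank (Mx f' r c').
Proof.
move=> H1 H2; rewrite -mxrank_tr tr_Mx -[RHS]mxrank_tr tr_Mx.
exact: rank_rows.
Qed.

Lemma rank_filter_rows (X Y : eqType) (f : X -> Y -> k) (P : pred X) r c :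
  (forall x, x \in r -> ~~ P x -> forall y, y \in c -> f x y = 0) ->
  \rank (Mx f r c) = \rank (Mx f (filter P r) c).
Proof.
move=> H; apply: rank_rows => x xr.
  case Px: (P x); last by left; apply: H => //; rewrite Px.
  by right; exists x => //; rewrite mem_filter Px.
by right; exists x => //; move: xr; rewrite mem_filter => /andP[].
Qed.

Lemma rank_filter_cols (X Y : eqType) (f : X -> Y -> k) (Q : pred Y) r c :
  (forall y, y \in c -> ~~ Q y -> forall x, x \in r -> f x y = 0) ->
  \rank (Mx f r c) = \rank (Mx f r (filter Q c)).
Proof.
move=> H; rewrite -mxrank_tr tr_Mx -[RHS]mxrank_tr tr_Mx.
exact: rank_filter_rows.
Qed.

Lemma rank_block (X Y : eqType) (f : X -> Y -> k) (P : pred X) (Q : pred Y) r c :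
  (forall x y, x \in r -> y \in c -> P x != Q y -> f x y = 0) ->
  \rank (Mx f r c) = (\rank (Mx f (filter P r) (filter Q c)) +
                      \rank (Mx f (filter (predC P) r) (filter (predC Q) c)))%N.
Proof.
move=> H.
set A := Mx f (filter P r) c; set B := Mx f (filter (predC P) r) c.
have eS : \rank (Mx f r c) = \rank (A + B)%MS.
  apply/eqP; rewrite eqn_leq; apply/andP; split; apply: mxrankS.
    apply/row_subP => i; rewrite row_Mx.
    have xr := mem_tnth i (in_tuple r).
    case Px: (P (tnth (in_tuple r) i)).
      apply: submx_trans (addsmxSl A B); apply: rowv_sub; by rewrite mem_filter Px.
    apply: submx_trans (addsmxSr A B); apply: rowv_sub; by rewrite mem_filter /= Px.
  rewrite addsmx_sub; apply/andP; split; apply/row_subP => i; rewrite row_Mx;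
    apply: rowv_sub; have := mem_tnth i (in_tuple (filter _ r));
    by rewrite mem_filter => /andP[].
set D := diag_mx (\row_j ((Q (tnth (in_tuple c) j))%:R : k)).
have AD : A *m D = A.
  apply/matrixP => i j; rewrite mul_mx_diag !mxE.
  have := mem_tnth i (in_tuple (filter P r)); rewrite mem_filter => /andP[Px xr].
  case Qy: (Q _); first by rewrite mulr1.
  by rewrite mulr0 H // ?Px ?Qy // mem_tnth.
have BD : B *m D = 0.
  apply/matrixP => i j; rewrite mul_mx_diag !mxE.
  have := mem_tnth i (in_tuple (filter (predC P) r)); rewrite mem_filter => /andP[Px xr].
  case Qy: (Q _); last by rewrite mulr0.
  by rewrite mulr1 H // ?Qy //= ?(negbTE Px) // mem_tnth.
have dis : (A :&: B)%MS = 0.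
  apply/eqP; rewrite -submx0; apply/rV_subP => v; rewrite sub_capmx => /andP[].
  move=> /submxP [u1 ->] /submxP [u2 e2].
  have : u1 *m A *m D = u2 *m B *m D by rewrite -e2.
  by rewrite -!mulmxA AD BD mulmx0 => ->; rewrite sub0mx.
rewrite eS mxrank_disjoint_sum //; congr (_ + _)%N.
  rewrite /A (@rank_filter_cols _ _ _ Q) // => y yc Qy x.
  by rewrite mem_filter => /andP[Px xr]; apply: H => //; rewrite Px (negbTE Qy).
rewrite /B (@rank_filter_cols _ _ _ (predC Q)) // => y yc Qy x.
rewrite mem_filter => /andP[Px xr]; apply: H => //.
by move: Px Qy; rewrite /= !negbK => /negbTE -> ->.
Qed.

End Frame.


Lemma rank_count (k : fieldType) (X Y : eqType) (f : X -> Y -> k) r c :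
  uniq r ->
  (forall y x1 x2, y \in c -> x1 \in r -> x2 \in r -> f x1 y != 0 -> f x2 y != 0 -> x1 = x2) ->
  \rank (Mx f r c) = count (fun x => has (fun y => f x y != 0) c) r.
Proof.
elim: r c => [|x r IH] c.
  by move=> _ _ /=; apply/eqP; rewrite -leqn0 rank_leq_row.
move=> /andP[xr ur] H.
rewrite (rank_block (P := pred1 x) (Q := fun y => f x y != 0)); last first.
  move=> x0 y x0r yc; case: (eqVneq x0 x) => [->|ne] /=; first by rewrite eqxx; case: (f x y =P 0).
  rewrite (negbTE ne) => nz; have nz' : f x y != 0 by move: nz; case: (f x y != 0).
  case: (eqVneq (f x0 y) 0) => // nz0.
  by move: ne; rewrite (H y x0 x yc x0r _ nz0 nz') ?eqxx // inE eqxx.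
have e1 : filter (pred1 x) (x :: r) = [:: x].
  rewrite /= eqxx (eq_in_filter (a2 := pred0)) ?filter_pred0 //.
  by move=> z zr /=; apply/eqP => ezx; move: xr; rewrite -ezx zr.
have e2 : filter (predC (pred1 x)) (x :: r) = r.
  rewrite /= eqxx /= (eq_in_filter (a2 := predT)) ?filter_predT //.
  by move=> z zr /=; apply/eqP => ezx; move: xr; rewrite -ezx zr.
rewrite e1 e2 IH //; last first.
  move=> y x1 x2; rewrite mem_filter => /andP[_ yc] x1r x2r; apply: H => //;
  by rewrite inE ?x1r ?x2r orbT.
congr (_ + _)%N.
  case h: (has _ c).
    apply/eqP; rewrite eqn_leq rank_leq_row /= lt0n mxrank_eq0.
    have n0 : (0 < size (filter (fun y => f x y != 0%R) c))%N.
      by rewrite lt0n size_eq0 -has_filter h.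
    apply/negP => /eqP /matrixP /(_ ord0 (Ordinal n0)); rewrite !mxE.
    have : tnth (in_tuple (filter (fun y => f x y != 0) c)) (Ordinal n0) \in filter (fun y => f x y != 0) c by exact: mem_tnth.
    rewrite mem_filter => /andP[nz _] e.
    by move/eqP: nz; apply; exact: e.
  apply/eqP; rewrite -leqn0; apply: leq_trans (rank_leq_col _) _.
  by rewrite leqn0 size_eq0 -[_ == _]negbK -has_filter h.
apply: eq_in_count => z zr /=; apply/hasP/hasP => [[y]|[y yc nz]].
  by rewrite mem_filter => /andP[_ yc] nz; exists y.
exists y => //; rewrite mem_filter yc andbT /=; apply/negP => nz0.
have zx : z = x by apply: (H y z x yc); rewrite ?inE ?eqxx ?zr ?orbT.
by move: xr; rewrite -zx zr.
Qed.


Lemma count_enum_card (T : finType) (A : {pred T}) (P : pred T) :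
  count P (enum A) = #|[predI A & P]|.
Proof.
rewrite cardE -size_filter; apply/perm_size/uniq_perm.
- exact: filter_uniq (enum_uniq _).
- exact: enum_uniq.
by move=> x; rewrite mem_filter !mem_enum !inE andbC.
Qed.

Definition ntriv (V E : eqType) (g : V * seq E) : bool := g.2 != [::].
Definition sz1 (V E : eqType) (y : E * (V * seq E)) : bool := size y.2.2 == 1%N.

Section Gen.
Variables (V E : finType) (s t : E -> V).

Lemma mem_words N w : (w \in words E N) = (size w <= N)%N.
Proof.
elim: N w => [|N IH] w; first by case: w.
rewrite /= in_cons; case: w => [|a w] //=.
apply/allpairsP/idP => [[[b u] [_ /= uN [_ ->]]]|h]; first by rewrite ltnS -IH.
by exists (a, w); rewrite mem_enum IH -ltnS.
Qed.

Lemma uniq_words N : uniq (words E N).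
Proof.
elim: N => //= N IH; rewrite allpairs_uniq ?enum_uniq // ?andbT.
  by apply/allpairsP => [[[a w] [_ _]]].
by move=> [a w] [b u] _ _ /= [-> ->].
Qed.

Variables (Q0 : pred V) (Z : seq (seq E)) (N : nat).

Lemma mem_basis p :
  (p \in basis_list s t Q0 Z N) = basisp s t Q0 Z p && (size p.2 <= N)%N.
Proof.
rewrite mem_filter; case: p => v w /=; congr andb.
apply/allpairsP/idP => [[[b u] [_ /= uN [_ ->]]]|h]; first by rewrite -(mem_words N).
by exists (v, w); rewrite mem_enum mem_words.
Qed.

Lemma uniq_basis : uniq (basis_list s t Q0 Z N).
Proof.
apply: filter_uniq; rewrite allpairs_uniq ?enum_uniq ?uniq_words //.
by move=> [a w] [b u] _ _ /= [-> ->].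
Qed.

Lemma mem_dom g :
  (g \in dom_list s t Q0 Z N) = (g \in basis_list s t Q0 Z N) && (tgt t g == src g).
Proof. by rewrite mem_filter andbC. Qed.

Lemma uniq_dom : uniq (dom_list s t Q0 Z N).
Proof. exact: filter_uniq uniq_basis. Qed.

Lemma mem_codom a p :
  ((a, p) \in codom_list s t Q0 Z N) =
  [&& p \in basis_list s t Q0 Z N, src p == s a & tgt t p == t a].
Proof.
apply/allpairsPdep/idP => [[b [q [_ /= qin [-> ->]]]]|h].
  by move: qin; rewrite mem_filter andbC.
by exists a, p; rewrite mem_enum mem_filter; case/and3P: h => -> -> ->.
Qed.

Lemma uniq_codom : uniq (codom_list s t Q0 Z N).
Proof.
apply: allpairs_uniq_dep; first exact: enum_uniq.
  by move=> a _; apply: filter_uniq uniq_basis.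
by move=> [a p] [b q] _ _ /= [-> ->].
Qed.

Variable k : fieldType.

Lemma coef_nz g y : coef s t k g y != 0 ->
  ((s y.1 == src g) && (y.2 == (src g, rcons g.2 y.1))) ||
  ((t y.1 == src g) && (y.2 == (s y.1, y.1 :: g.2))).
Proof.
rewrite /coef; case: (_ && _); case: (_ && _) => //.
by rewrite subrr eqxx.
Qed.

Lemma coef_size g y : coef s t k g y != 0 -> size y.2.2 = (size g.2).+1.
Proof.
by move/coef_nz => /orP[] /andP[_ /eqP ->] /=; rewrite ?size_rcons.
Qed.

Lemma rank_split :
  \rank (delta0_mx s t k Q0 Z N) =
  (\rank (Mx (coef s t k) (filter (predC (@ntriv V E)) (dom_list s t Q0 Z N))
             (filter (@sz1 V E) (codom_list s t Q0 Z N))) +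
   \rank (Mx (coef s t k) (filter (predC (predC (@ntriv V E))) (dom_list s t Q0 Z N))
             (filter (predC (@sz1 V E)) (codom_list s t Q0 Z N))))%N.
Proof.
rewrite [delta0_mx _ _ _ _ _ _]/(delta0_mx _ _ _ _ _ _).
rewrite -[\matrix_(i, j) _]/(Mx (coef s t k) _ _).
apply: rank_block => g y _ _ ne; apply/eqP; apply/negP => /negP nz.
move: ne; rewrite /ntriv /sz1 /= (coef_size nz) eqSS size_eq0.
by case: (g.2 == [::]).
Qed.

End Gen.


Lemma rank_cols_sub (k : fieldType) (X Y : eqType) (f : X -> Y -> k) r c c' :
  {subset c' <= c} -> (\rank (Mx f r c') <= \rank (Mx f r c))%N.
Proof.
move=> sub; rewrite -mxrank_tr tr_Mx -[X in (_ <= X)%N]mxrank_tr tr_Mx.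
apply: mxrankS; apply: Mx_subr => y yc; right; exists y => //; exact: sub.
Qed.

Lemma adj_sym (V E : finType) (s t : E -> V) : symmetric (adj s t).
Proof.
move=> u v; apply: eq_existsb => a; exact: orbC.
Qed.

Section Inc.
Variables (V E : finType) (s t : E -> V) (Q0 : pred V) (Z : seq (seq E)) (N : nat).
Variable k : fieldType.
Hypothesis HQ : forall a, (s a \in Q0) && (t a \in Q0).
Hypothesis HZ : forall r, r \in Z -> (2 <= size r)%N.
Hypothesis HN : (0 < N)%N.

Lemma avoids0 : avoids Z [::].
Proof.
apply/allP => r rZ; rewrite infixs0; have := HZ rZ; by case: r {rZ}.
Qed.

Lemma avoids1 a : avoids Z [:: a].
Proof.
apply/allP => r rZ; rewrite infixs1; have := HZ rZ; case: r {rZ} => [|? [|? ?]] //= _.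
by rewrite eqseq_cons andbF.
Qed.

Let vs := enum Q0.
Let rt := fingraph.root (adj s t).
Let symA : connect_sym (adj s t) := sym_connect_sym (@adj_sym V E s t).

Let fS := fun (y : E * (V * seq E)) (v : V) => coef s t k (v, [::]) y.
Let gU := fun (v w : V) => ((w == v)%:R - (w == rt v)%:R : k).
Let dvec (x y : V) : 'rV[k]_(size vs) :=
  \row_j ((tnth (in_tuple vs) j == x)%:R - (tnth (in_tuple vs) j == y)%:R).

Lemma incidence :
  (\rank (Mx (coef s t k) (filter (predC (@ntriv V E)) (dom_list s t Q0 Z N))
             (filter (@sz1 V E) (codom_list s t Q0 Z N)))
   + n_comp (adj s t) Q0)%N = #|Q0|.
Proof.
set C1 := filter (@sz1 V E) (codom_list s t Q0 Z N).
have step1 : \rank (Mx (coef s t k) (filter (predC (@ntriv V E)) (dom_list s t Q0 Z N)) C1)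
           = \rank (Mx (fun v y => coef s t k (v, [::]) y) vs C1).
  apply: rank_rows => [[v w]|v].
    rewrite mem_filter /ntriv /= negbK mem_dom mem_basis => /andP[/eqP -> /andP[/andP[/andP[vQ _] _] _]].
    by right; exists v; rewrite // /vs mem_enum; case/andP: vQ.
  rewrite /vs mem_enum => vQ; right; exists (v, [::]) => //.
  by rewrite mem_filter /ntriv /= mem_dom mem_basis /basisp /valid /= vQ avoids0 eqxx.
rewrite step1 -mxrank_tr tr_Mx.
set S := Mx fS C1 vs.
have arrow a : (dvec (s a) (t a) <= S)%MS.
  have yC : (a, (s a, [:: a])) \in C1.
    rewrite /C1 mem_filter /sz1 /= mem_codom mem_basis /basisp /valid /= avoids1 eqxx HN.
    by rewrite /tgt /= eqxx !andbT; case/andP: (HQ a).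
  have -> : dvec (s a) (t a) = rowv fS vs (a, (s a, [:: a])).
    apply/rowP => j; rewrite !mxE /fS /coef /= !xpair_eqE !eqxx !andbT.
    by rewrite andbb (eq_sym (s a)) (eq_sym (t a)).
  exact: rowv_sub.
have pathS p v : path (adj s t) v p -> (dvec v (last v p) <= S)%MS.
  elim: p v => [|x p IH] v /=.
    move=> _; have -> : dvec v v = 0 by apply/rowP => j; rewrite !mxE subrr.
    exact: sub0mx.
  move=> /andP[avx px].
  have -> : dvec v (last x p) = dvec v x + dvec x (last x p).
    by apply/rowP => j; rewrite !mxE addrA subrK.
  apply: addmx_sub; last exact: IH.
  case/existsP: avx => a /orP[/andP[/eqP sa /eqP ta]|/andP[/eqP sa /eqP ta]].
    by rewrite -sa -ta.
  have -> : dvec v x = (-1) *: dvec (s a) (t a).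
    by apply/rowP => j; rewrite !mxE sa ta mulN1r opprB.
  by apply: scalemx_sub.
set G := Mx gU vs vs.
have SG : \rank S = \rank G.
  apply/eqP; rewrite eqn_leq; apply/andP; split; apply: mxrankS.
    apply/row_subP => i; rewrite row_Mx.
    have := mem_tnth i (in_tuple C1).
    case: (tnth _ i) => a [x w].
    rewrite mem_filter /sz1 mem_codom => /andP[w1 /and3P[_ /eqP xa _]].
    rewrite /src /= in xa.
    case: w w1 => [|b [|? ?]] //= _.
    case: (eqVneq b a) => [eba|nba].
      have -> : rowv fS vs (a, (x, [:: b])) = rowv gU vs (s a) + (-1) *: rowv gU vs (t a).
        have rr : rt (s a) = rt (t a).
          rewrite /rt; apply/eqP; rewrite (root_connect symA); apply: connect1; apply/existsP; exists a; by rewrite !eqxx.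
        apply/rowP => j; rewrite !mxE /fS /gU /coef /= !xpair_eqE eba xa !eqxx !andbT.
        rewrite andbb (eq_sym (s a)) (eq_sym (t a)) rr mulN1r opprB addrA subrK.
        by [].
      apply: addmx_sub; last apply: scalemx_sub; apply: rowv_sub; rewrite mem_enum;
      by case/andP: (HQ a).
    have -> : rowv fS vs (a, (x, [:: b])) = 0.
      apply/rowP => j; rewrite !mxE /fS /coef /= !xpair_eqE !eqseq_cons.
      by rewrite (negbTE nba) !andbF subrr.
    exact: sub0mx.
  apply/row_subP => i; rewrite row_Mx.
  set v := tnth _ i.
  have -> : rowv gU vs v = dvec v (rt v) by apply/rowP => j; rewrite !mxE.
  have /connectP [p pp e] := connect_root (adj s t) v.
  rewrite /rt e; exact: pathS.
set nr := filter (predC (roots (adj s t))) vs.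
have Gnr : \rank G = \rank (Mx gU nr vs).
  apply: rank_filter_rows => x _ /negPn /eqP rx y _.
  by rewrite /gU /rt rx subrr.
have nrrk : \rank (Mx gU nr vs) = size nr.
  apply/eqP; rewrite eqn_leq rank_leq_row /=.
  have unr : uniq nr by apply: filter_uniq; exact: enum_uniq.
  have nroot y x : y \in nr -> (y == rt x) = false.
    rewrite mem_filter => /andP[ny _]; apply/negP => /eqP eyx.
    by move: ny; rewrite /= eyx /rt roots_root.
  have sub : {subset nr <= vs} by move=> y; rewrite mem_filter => /andP[].
  apply: leq_trans (rank_cols_sub gU nr sub).
  rewrite rank_count //.
    rewrite (eq_in_count (a2 := predT)) ?count_predT //.
    move=> x xn /=; apply/hasP; exists x => //.
    by rewrite /gU eqxx nroot // subr0 oner_neq0.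
  move=> y x1 x2 yn _ _; rewrite /gU !nroot // !subr0.
  case: (eqVneq y x1) => [<- _|_]; last by rewrite /= ?mulr0n eqxx.
  by case: (eqVneq y x2) => // _; rewrite /= ?mulr0n eqxx.
rewrite SG Gnr nrrk size_filter count_enum_card.
rewrite -(cardID (roots (adj s t)) Q0) addnC; congr (_ + _)%N; apply: eq_card => x;
by rewrite !inE // andbC.
Qed.

End Inc.


Lemma avoids_cons (E : finType) (Z' : seq (seq E)) a w : avoids Z' (a :: w) -> avoids Z' w.
Proof.
move=> h; apply/allP => r rZ; move/allP: h => /(_ r rZ); apply: contra => iw.
by rewrite infix_consl iw orbT.
Qed.

Section Glue.
Variables (V E : finType) (s t : E -> V) (Z : seq (seq E)) (v1 vn : V) (N : nat).
Hypothesis v1n : v1 != vn.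
Local Notation gl := (glue v1 vn).
Local Notation sB' := (sB s v1 vn).
Local Notation tB' := (tB t v1 vn).
Local Notation ZB' := (ZB s t Z v1 vn).
Local Notation Q0B' := (Q0B vn).

Lemma gl_v1 : gl v1 = v1. Proof. by rewrite /glue (negbTE v1n). Qed.
Lemma gl_vn : gl vn = v1. Proof. by rewrite /glue eqxx. Qed.
Lemma gl_ne x : x != vn -> gl x = x. Proof. by rewrite /glue => /negbTE ->. Qed.
Lemma gl_neq_vn x : gl x != vn.
Proof. by rewrite /glue; case: (eqVneq x vn). Qed.

Lemma gl_eq x y : gl x = gl y -> x = y \/ (x \in [:: v1; vn]) && (y \in [:: v1; vn]).
Proof.
rewrite /glue; case: (eqVneq x vn) => [->|xn]; case: (eqVneq y vn) => [->|yn] //.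
- by left.
- by move=> e; right; rewrite !inE e !eqxx orbT.
- by move=> e; right; rewrite !inE e !eqxx orbT.
- by left.
Qed.

Lemma chain_gl x w : chain s t x w -> chain sB' tB' (gl x) w.
Proof.
elim: w x => //= a w IH x /andP[/eqP sa cw].
by rewrite /sB sa eqxx /=; apply: IH.
Qed.

Lemma chain_infix2 x w c b : chain s t x w -> infix [:: c; b] w -> t c = s b.
Proof.
elim: w x => [|a w IH] x //=.
move=> /andP[_ cw] /orP[|]; last exact: (IH _ cw).
case: w cw {IH} => [|b' w] /=; first by rewrite andbF.
move=> /andP[/eqP sb _] /andP[/eqP ca].
by move=> /andP[/eqP bb _]; rewrite ca bb sb.
Qed.

Lemma avoidsB x w : chain s t x w -> avoids Z w -> avoids ZB' w.
Proof.
move=> cw aw; rewrite /avoids /ZB all_cat; apply/andP; split; first exact: aw.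
apply/allP => r /allpairsPdep [c [b [_]]]; rewrite mem_filter => /andP[/andP[_ ne] _] ->.
by apply/negP => /(chain_infix2 cw) e; move: ne; rewrite e eqxx.
Qed.

Lemma tgt_gl x w : tgt tB' (gl x, w) = gl (tgt t (x, w)).
Proof. by rewrite /tgt /= /tB (map_comp (glue v1 vn) t) last_map. Qed.

Lemma basis_gl p : p \in basis_list s t (@Q0A V) Z N ->
  (gl p.1, p.2) \in basis_list sB' tB' Q0B' ZB' N.
Proof.
case: p => x w; rewrite !mem_basis /basisp /valid => /andP[/andP[/andP[_ cw] aw] sz].
by rewrite /= in cw aw sz *; rewrite (avoidsB cw aw) chain_gl // sz !andbT inE gl_neq_vn.
Qed.

Definition lsrc (w : seq E) : V := if w is a :: _ then s a else v1.
Definition ltgt (w : seq E) : V := last (lsrc w) (map t w).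

Lemma chainA_src x w : chain s t x w -> w != [::] -> x = lsrc w.
Proof. by case: w => //= a w /andP[/eqP]. Qed.

Lemma tgt_ltgt x w : w != [::] -> tgt t (x, w) = ltgt w.
Proof. by case: w. Qed.

Lemma chain_rcons x w a :
  chain s t x (rcons w a) = chain s t x w && (s a == last x (map t w)).
Proof.
elim: w x => [|b w IH] x /=; first by rewrite andbT.
by rewrite IH andbA.
Qed.

Lemma chainB_lift v w : chain sB' tB' v w -> avoids ZB' w ->
  chain s t (lsrc w) w /\ (w != [::] -> v = gl (lsrc w)).
Proof.
elim: w v => [|a w IH] v //= /andP[/eqP sa cw] aw.
have [cw' e] := IH _ cw (avoids_cons aw).
split; last by rewrite -sa.
rewrite eqxx /=; case: w cw aw cw' e {IH} => [|b w] //= _ aw cw' e.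
have {}e : gl (t a) = gl (s b) by rewrite -[gl (t a)]/(tB' a) e.
suff -> : t a = s b by [].
case: (gl_eq e) => // /andP[ta sb].
case: (eqVneq (t a) (s b)) => // ne.
have inP : [:: a; b] \in ZB'.
  rewrite mem_cat; apply/orP; right; apply/allpairsPdep; exists a, b; split.
  - by rewrite mem_enum.
  - by rewrite mem_filter mem_enum ta sb ne.
  - by [].
move/allP: aw => /(_ _ inP) /negP; case; exact: (prefix_infix [:: a; b] w).
Qed.

Lemma basisB_lift v w : (v, w) \in basis_list sB' tB' Q0B' ZB' N -> w != [::] ->
  v = gl (lsrc w) /\ (lsrc w, w) \in basis_list s t (@Q0A V) Z N.
Proof.
rewrite !mem_basis /basisp /valid /= => /andP[/andP[/andP[_ cw] aw] sz] wn.
have [cw' e] := chainB_lift cw aw; split; first exact: e.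
rewrite cw' sz andbT /=; move: aw; rewrite /avoids /ZB all_cat => /andP[-> _].
by [].
Qed.


Lemma ltgt_last w x : w != [::] -> ltgt w = t (last x w).
Proof. by case: w => // b w _; rewrite /ltgt /= last_map. Qed.

Lemma lsrc_rcons w a : w != [::] -> lsrc (rcons w a) = lsrc w.
Proof. by case: w. Qed.

Lemma basis_chain p : p \in basis_list s t (@Q0A V) Z N -> chain s t p.1 p.2.
Proof. by rewrite mem_basis /basisp /valid => /andP[/andP[/andP[_ ->]]]. Qed.

Variable k : fieldType.
Local Notation coefA := (coef s t k).
Local Notation coefB := (coef sB' tB' k).
Local Notation domA := (dom_list s t (@Q0A V) Z N).
Local Notation codA := (codom_list s t (@Q0A V) Z N).
Local Notation domB := (dom_list sB' tB' Q0B' ZB' N).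
Local Notation codB := (codom_list sB' tB' Q0B' ZB' N).
Local Notation rA := (filter (predC (predC (@ntriv V E))) domA).
Local Notation cA2 := (filter (predC (@sz1 V E)) codA).
Local Notation rB := (filter (predC (predC (@ntriv V E))) domB).
Local Notation cB2 := (filter (predC (@sz1 V E)) codB).

Definition Pp (g : V * seq E) : bool := lsrc g.2 != ltgt g.2.

Lemma mem_rB g : g \in rB ->
  [/\ g.2 != [::], g = (gl (lsrc g.2), g.2),
      (lsrc g.2, g.2) \in basis_list s t (@Q0A V) Z N &
      gl (lsrc g.2) = gl (ltgt g.2)].
Proof.
case: g => v w; rewrite mem_filter /ntriv /= negbK mem_dom => /andP[wn /andP[bB /eqP tg]].
have [ev bA] := basisB_lift bB wn.
split => //; first by rewrite -ev.
by move: tg; rewrite /src /= ev tgt_gl tgt_ltgt // => ->.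
Qed.

Lemma mem_codB a z q : (a, (z, q)) \in codB -> q != [::] ->
  [/\ z = gl (lsrc q), (lsrc q, q) \in basis_list s t (@Q0A V) Z N,
      z = gl (s a) & gl (ltgt q) = gl (t a)].
Proof.
rewrite mem_codom => /and3P[bB /eqP sz /eqP tz] qn.
have [ez bA] := basisB_lift bB qn.
split => //.
by move: tz; rewrite ez tgt_gl tgt_ltgt.
Qed.

Lemma K1 g g' y : g \in rB -> g' \in rB -> y \in codB ->
  coefB g y != 0 -> coefB g' y != 0 -> Pp g' -> g = g'.
Proof.
move=> gB g'B; case: y => a [z q] yB nz nz' Pg'.
have [wn eg bA _] := mem_rB gB.
have [wn' eg' bA' _] := mem_rB g'B.
case: g eg wn bA gB nz => v w /= eg wn bA gB nz.
case: g' eg' wn' bA' g'B nz' Pg' => v' w' /= eg' wn' bA' g'B nz' Pg'.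
rewrite eg eg'; suff -> : w = w' by [].
have qn : q != [::].
  by case/orP: (coef_nz nz) => /andP[_ /eqP [_ ->]] //; case: (w).
have [_ bq _ _] := mem_codB yB qn.
have cq := basis_chain bq; rewrite /= in cq.
move: Pg'; rewrite /Pp /=.
case/orP: (coef_nz nz) => /andP[_ /eqP [_ eq]]; case/orP: (coef_nz nz') => /andP[_ /eqP [_ eq']] /=.
- by move: eq'; rewrite eq => /rcons_inj [].
- move: cq; rewrite eq' /= eqxx /= => cw'.
  rewrite -(chainA_src cw' wn') (ltgt_last (a) wn').
  have : last a w' = a by rewrite -[last a w']/(last a (a :: w')) -eq' eq last_rcons.
  by move=> ->; rewrite eqxx.
- move: cq; rewrite eq' chain_rcons (lsrc_rcons _ wn') => /andP[_ /eqP sa].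
  have : lsrc w' = s a.
    by move: eq; rewrite eq'; move: wn'; case: (w') => //= b u _ [->].
  by move=> e; rewrite /ltgt -sa e eqxx.
- by move: eq'; rewrite eq => [[->]].
Qed.


Definition Qp (y : E * (V * seq E)) : bool := has (fun g => Pp g && (coefB g y != 0)) rB.
Definition hB (g : V * seq E) : V * seq E := (gl g.1, g.2).
Definition gmap (y : E * (V * seq E)) : E * (V * seq E) := (y.1, (gl y.2.1, y.2.2)).

Lemma nPp_fact g : g \in rB -> ~~ Pp g ->
  [/\ g.2 != [::], g = (gl (lsrc g.2), g.2),
      (lsrc g.2, g.2) \in basis_list s t (@Q0A V) Z N &
      lsrc g.2 = ltgt g.2].
Proof. by move=> /mem_rB [wn eg bA _] /negPn /eqP e. Qed.

Lemma K3 x a z q : x \in rB -> ~~ Pp x -> (a, (z, q)) \in cB2 ->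
  coefB x (a, (z, q)) != 0 -> (a, (lsrc q, q)) \in cA2 /\ gmap (a, (lsrc q, q)) = (a, (z, q)).
Proof.
move=> xB nPx; rewrite mem_filter => /andP[nsz yB] nz.
have [wn ex bAx ew] := nPp_fact xB nPx.
case: x ex wn bAx ew xB nPx nz => v w /= ex wn bAx ew xB nPx nz.
have qn : q != [::].
  by case/orP: (coef_nz nz) => /andP[_ /eqP [_ ->]] //; case: (w).
have [ez bq _ _] := mem_codB yB qn.
have cq := basis_chain bq; rewrite /= in cq.
have cw := basis_chain bAx; rewrite /= in cw.
suff [e1 e2] : s a = lsrc q /\ t a = ltgt q.
  split; last by rewrite /gmap /= -ez.
  rewrite mem_filter; apply/andP; split; first exact: nsz.
  rewrite mem_codom bq /src /= e1 eqxx /=.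
  by rewrite tgt_ltgt // e2.
case/orP: (coef_nz nz) => /andP[_ /eqP [_ eq]].
- move: cq; rewrite eq chain_rcons (lsrc_rcons _ wn) => /andP[_ /eqP sa].
  split; first by rewrite sa.
  by rewrite (ltgt_last a) ?last_rcons // -size_eq0 size_rcons.
- rewrite eq; split => //.
  move: cq; rewrite eq /= eqxx /= => cw'.
  by rewrite (ltgt_last a) // -(ltgt_last a wn) -ew -(chainA_src cw' wn).
Qed.

Lemma K4 y : y \in cA2 -> gmap y \in cB2.
Proof.
case: y => a [x w]; rewrite !mem_filter /= => /andP[-> ]; rewrite !mem_codom.
move=> /and3P[bA /eqP xa /eqP ta].
have := basis_gl bA; rewrite /= => bB.
rewrite /src /= in xa.
by rewrite /gmap /= bB tgt_gl ta /src /= xa !eqxx.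
Qed.

Lemma K2 x : (x \in filter (predC Pp) rB) = (x \in map hB rA).
Proof.
apply/idP/mapP => [|[p pA ->]].
  rewrite mem_filter => /andP[nPx xB].
  have [wn ex bA ew] := nPp_fact xB nPx.
  exists (lsrc x.2, x.2) => //.
  rewrite mem_filter /ntriv /= negbK wn mem_dom bA /= tgt_ltgt //.
  by rewrite ew eqxx.
move: pA; case: p => y w; rewrite mem_filter /ntriv /= negbK mem_dom.
move=> /andP[wn /andP[bA /eqP tg]].
have cw := basis_chain bA; rewrite /= in cw.
rewrite mem_filter /= mem_filter /ntriv /= negbK wn mem_dom.
rewrite (basis_gl bA) /= tgt_gl tg eqxx /= /Pp /= negbK.
by rewrite andbT -(chainA_src cw wn) -(tgt_ltgt y wn) tg.
Qed.

Lemma K5 x0 y0 : x0 \in rA -> y0 \in cA2 -> coefA x0 y0 = coefB (hB x0) (gmap y0).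
Proof.
case: x0 => x w; case: y0 => a [z u].
move=> x0A; rewrite mem_filter mem_codom => /andP[_ /and3P[bAu /eqP za /eqP ta]].
move: x0A; rewrite mem_filter /ntriv /= negbK mem_dom => /andP[wn /andP[bAx /eqP tg]].
rewrite /src /= in za tg.
have cw := basis_chain bAx; rewrite /= in cw.
have cu := basis_chain bAu; rewrite /= in cu.
have xw := chainA_src cw wn.
have h1 : u = rcons w a -> z = x /\ s a = x.
  move=> eu; have un : u != [::] by rewrite eu -size_eq0 size_rcons.
  have zu := chainA_src cu un; rewrite eu (lsrc_rcons _ wn) -xw in zu.
  by split => //; rewrite -za.
have h2 : u = a :: w -> t a = x.
  move=> eu; move: cu; rewrite eu /= => /andP[_ cw'].
  by rewrite xw (chainA_src cw' wn).
rewrite /coef /hB /gmap /sB /tB /=.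
congr (_%:R - _%:R).
- case: (eqVneq u (rcons w a)) => [eu|nu].
    by have [-> ->] := h1 eu; rewrite eu !eqxx.
  by rewrite !xpair_eqE (negbTE nu) !andbF.
- case: (eqVneq u (a :: w)) => [eu|nu].
    by rewrite (h2 eu) eu za !eqxx.
  by rewrite !xpair_eqE (negbTE nu) !andbF.
Qed.


Let E12 := filter (fun p : V * seq E => ((src p == v1) && (tgt t p == vn)) ||
                                        ((src p == vn) && (tgt t p == v1)))
                  (basis_list s t (@Q0A V) Z N).

Lemma E12_fact p : p \in E12 ->
  [/\ p.2 != [::], p.1 = lsrc p.2, (v1, p.2) \in rB & Pp (v1, p.2)].
Proof.
case: p => x w; rewrite mem_filter /src /= => /andP[ends bA].
have cw := basis_chain bA; rewrite /= in cw.
have xt : x != tgt t (x, w).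
  by case/orP: ends => /andP[/eqP -> /eqP ->]; rewrite // eq_sym.
have wn : w != [::] by move: xt; case: (w) => //=; rewrite eqxx.
have xw := chainA_src cw wn.
have glx : gl x = v1.
  by case/orP: ends => /andP[/eqP -> _]; rewrite ?gl_v1 ?gl_vn.
have glt : gl (tgt t (x, w)) = v1.
  by case/orP: ends => /andP[_ /eqP ->]; rewrite ?gl_v1 ?gl_vn.
split => //.
  rewrite mem_filter /ntriv /= negbK wn mem_dom.
  have := basis_gl bA; rewrite /= glx => -> /=.
  by have := tgt_gl x w; rewrite glx glt => ->.
by rewrite /Pp /= -xw -(tgt_ltgt x wn).
Qed.

Lemma countsp :
  count (fun g => has (fun y => coefB g y != 0) (filter Qp cB2)) (filter Pp rB) =
  sp s t Z v1 vn k N.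
Proof.
rewrite /sp.
have -> : count (special s t Z v1 vn k N) (basis_list s t (@Q0A V) Z N) =
   count (fun p => has (fun ap => coefB (v1, p.2) ap != 0) codB) E12.
  rewrite /E12 count_filter; apply: eq_in_count => p pA /=.
  rewrite /special; move: (pA); rewrite mem_basis => /andP[-> _] /=.
  by rewrite andbC.
have pe : perm_eq (filter Pp rB) (map (fun p => (v1, p.2)) E12).
  apply: uniq_perm.
  - by apply: filter_uniq; apply: filter_uniq; exact: uniq_dom.
  - rewrite map_inj_in_uniq; first by apply: filter_uniq; exact: uniq_basis.
    move=> p p' pE p'E /= [e].
    have [_ e1 _ _] := E12_fact pE; have [_ e1' _ _] := E12_fact p'E.
    by case: p p' e1 e1' e {pE p'E} => x w [x' w'] /= -> -> ->.
  - move=> g; apply/idP/mapP => [|[p pE ->]].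
      rewrite mem_filter => /andP[Pg gB].
      have [wn eg bA egl] := mem_rB gB.
      have [/eqP|/andP[l1 l2]] := gl_eq egl; first by move: Pg; rewrite /Pp => /negbTE ->.
      have glv : gl (lsrc g.2) = v1.
        by move: l1; rewrite !inE => /orP[] /eqP ->; rewrite ?gl_v1 ?gl_vn.
      exists (lsrc g.2, g.2); last by rewrite eg /= glv.
      rewrite mem_filter bA andbT /src /= tgt_ltgt //.
      move: Pg l1 l2; rewrite /Pp !inE.
      by move=> ne /orP[] /eqP e1 /orP[] /eqP e2; move: ne; rewrite e1 e2 !eqxx /= ?orbT.
    have [_ _ gB Pg] := E12_fact pE.
    by rewrite mem_filter Pg gB.
rewrite (permP pe) count_map; apply: eq_in_count => p pE /=.
have [_ _ gB Pg] := E12_fact pE.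
apply/hasP/hasP => [[y]|[y yB nz]].
  by rewrite !mem_filter => /andP[_ /andP[_ yB]] nz; exists y.
exists y => //; rewrite mem_filter; apply/andP; split.
  by apply/hasP; exists (v1, p.2) => //; rewrite Pg nz.
rewrite mem_filter yB andbT /= /sz1 (coef_size nz).
have [wn _ _ _] := E12_fact pE.
by move: wn; case: (p.2).
Qed.


Lemma ntB_eq :
  \rank (Mx coefB rB cB2) = (sp s t Z v1 vn k N + \rank (Mx coefA rA cA2))%N.
Proof.
have cross : forall g y, g \in rB -> y \in cB2 -> Pp g != Qp y -> coefB g y = 0.
  move=> g y gB yc; case Pg: (Pp g) => /=.
    case: (eqVneq (coefB g y) 0) => // nz.
    suff -> : Qp y by [].
    by apply/hasP; exists g => //; rewrite Pg nz.
  rewrite negbK => /hasP [g' g'B /andP[Pg' nz']].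
  case: (eqVneq (coefB g y) 0) => // nz.
  have yB : y \in codB by move: yc; rewrite mem_filter => /andP[].
  by move: Pg; rewrite (K1 gB g'B yB nz nz' Pg') Pg'.
rewrite (rank_block (P := Pp) (Q := Qp)) //; congr (_ + _)%N.
  rewrite rank_count ?countsp //.
    by apply: filter_uniq; apply: filter_uniq; exact: uniq_dom.
  move=> y x1 x2 yf x1f x2f nz1 nz2.
  move: yf; rewrite mem_filter => /andP[_ yc].
  move: x1f; rewrite mem_filter => /andP[_ x1B].
  move: x2f; rewrite mem_filter => /andP[Px2 x2B].
  have yB : y \in codB by move: yc; rewrite mem_filter => /andP[].
  exact: K1 x1B x2B yB nz1 nz2 Px2.
set R := filter (predC Pp) rB.
have e1 : \rank (Mx coefB R cB2) = \rank (Mx coefB R (filter (predC Qp) cB2)).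
  apply: rank_filter_cols => y yc /negPn Qy x; rewrite mem_filter => /andP[nPx xB].
  by apply: cross => //; rewrite (negbTE nPx) Qy.
rewrite -e1.
have e2 : \rank (Mx coefB R cB2) = \rank (Mx coefB R (map gmap cA2)).
  apply: rank_cols => [y yc|y' /mapP [y0 y0A ->]]; last first.
    by right; exists (gmap y0) => //; exact: K4.
  case: (boolP (has (fun x => coefB x y != 0) R)) => [/hasP [x xR nz]|hn].
    right; move: xR; rewrite mem_filter => /andP[nPx xB].
    case: y yc nz => a [z q] yc nz.
    have [yA ey] := K3 xB nPx yc nz.
    exists (gmap (a, (lsrc q, q))); [exact: map_f | by rewrite ey].
  left => x xR; apply/eqP; apply: contraNT hn => nz; apply/hasP; exists x => //.
rewrite e2.
have e3 : \rank (Mx coefB R (map gmap cA2)) = \rank (Mx coefB (map hB rA) (map gmap cA2)).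
  apply: rank_rows => x xR.
    by right; exists x; rewrite -?K2.
  by right; exists x; rewrite ?K2.
rewrite e3.
have e4 : \rank (Mx coefB (map hB rA) (map gmap cA2)) =
          \rank (Mx (fun x y => coefB (hB x) y) rA (map gmap cA2)).
  apply: rank_rows => [x /mapP [x0 x0A ->]|x0 x0A].
    by right; exists x0.
  by right; exists (hB x0); rewrite ?map_f.
rewrite e4.
have e5 : \rank (Mx (fun x y => coefB (hB x) y) rA (map gmap cA2)) =
          \rank (Mx (fun x y => coefB (hB x) (gmap y)) rA cA2).
  apply: rank_cols => [y /mapP [y0 y0A ->]|y0 y0A].
    by right; exists y0.
  by right; exists (gmap y0); rewrite ?map_f.
rewrite e5; apply: rank_rows => x xA; right; exists x => // y yA.
  by rewrite K5.
by rewrite K5.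
Qed.


Local Notation adjA := (adj s t).
Local Notation adjB := (adj sB' tB').
Let symA : connect_sym adjA := sym_connect_sym (@adj_sym V E s t).
Let symB : connect_sym adjB := sym_connect_sym (@adj_sym V E sB' tB').

Lemma connect_gl u w : connect adjA u w -> connect adjB (gl u) (gl w).
Proof.
move=> /connectP [p pp ->]; elim: p u pp => [|x p IH] u /=; first by move=> _.
move=> /andP[uxa px]; apply: connect_trans (IH _ px); apply: connect1.
case/existsP: uxa => a h; apply/existsP; exists a; rewrite /sB /tB.
by case/orP: h => /andP[/eqP -> /eqP ->]; rewrite !eqxx ?orbT.
Qed.

Lemma chain_connect x w : chain s t x w -> connect adjA x (last x (map t w)).
Proof.
elim: w x => [|a w IH] x //= /andP[/eqP sa cw].
apply: connect_trans (IH _ cw); apply: connect1; apply/existsP; exists a.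
by rewrite sa !eqxx.
Qed.

Let C : pred V := fun x => connect adjA x v1 || connect adjA x vn.

Lemma C_v1 : C v1. Proof. by rewrite /C connect0. Qed.
Lemma C_vn : C vn. Proof. by rewrite /C connect0 orbT. Qed.

Lemma C_gl x : C (gl x) = C x.
Proof.
rewrite /glue; case: (eqVneq x vn) => [->|//]; by rewrite C_v1 C_vn.
Qed.

Lemma C_adj u w : adjA u w -> C u -> C w.
Proof.
move=> /connect1 uw; rewrite /C => /orP[] h; apply/orP; [left|right];
by apply: connect_trans h; rewrite symA.
Qed.

Lemma C_closedB : closed adjB C.
Proof.
have one : forall u w, adjB u w -> C u -> C w.
  move=> u w /existsP [a]; rewrite /sB /tB => /orP[] /andP[/eqP <- /eqP <-];
  rewrite !C_gl => h.
    by apply: (C_adj _ h); apply/existsP; exists a; rewrite !eqxx.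
  by apply: (C_adj _ h); apply/existsP; exists a; rewrite !eqxx orbT.
move=> u w uw; apply/idP/idP; first exact: one.
by apply: one; rewrite adj_sym.
Qed.

Lemma vn_isolB : closed adjB (predC1 vn).
Proof.
have h : forall u w, adjB u w -> w != vn.
  move=> u w /existsP [a]; rewrite /sB /tB => /orP[] /andP[]; [move=> _ /eqP <- | move=> /eqP <- _]; exact: gl_neq_vn.
move=> u w uw; rewrite !inE (h _ _ uw) (h w u) // adj_sym; exact: uw.
Qed.

Lemma Claim2 x : x != vn -> connect adjB v1 x = C x.
Proof.
move=> xn; apply/idP/idP.
  move=> /(closed_connect C_closedB) e; have : v1 \in C := C_v1; by rewrite e.
rewrite /C => /orP[] h; rewrite symA in h.
  by have := connect_gl h; rewrite gl_v1 (gl_ne xn).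
by have := connect_gl h; rewrite gl_vn (gl_ne xn).
Qed.

Lemma Claim1 x : ~~ C x -> connect adjA x =1 connect adjB x.
Proof.
move=> nCx.
have notC : forall y, connect adjA x y -> ~~ C y.
  move=> y xy; apply: contra nCx; rewrite /C => /orP[] h; apply/orP; [left|right];
  exact: connect_trans xy h.
have glid : forall y, ~~ C y -> gl y = y.
  by move=> y nCy; apply: gl_ne; apply: contraNneq nCy => ->; exact: C_vn.
have glinv : forall z u, gl z = u -> ~~ C u -> z = u.
  move=> z u <- nC; rewrite glid //; by rewrite -C_gl.
move=> y; apply/idP/idP => h.
  by have := connect_gl h; rewrite (glid x nCx) (glid y (notC y h)).
have cl : closed adjB (connect adjA x).
  have one : forall u w, adjB u w -> connect adjA x u -> connect adjA x w.
    move=> u w /existsP [a]; rewrite /sB /tB => /orP[] /andP[/eqP su /eqP tw] xu.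
      have nCu := notC _ xu; have esa := glinv _ _ su nCu.
      have xt : connect adjA x (t a).
        apply: connect_trans xu _; apply: connect1; apply/existsP; exists a.
        by rewrite esa !eqxx.
      by rewrite -tw (glid _ (notC _ xt)).
    have nCu := notC _ xu; have eta := glinv _ _ tw nCu.
    have xs : connect adjA x (s a).
      apply: connect_trans xu _; apply: connect1; apply/existsP; exists a.
      by rewrite eta !eqxx orbT.
    by rewrite -su (glid _ (notC _ xs)).
  move=> u w uw; apply/idP/idP; first exact: one.
  by apply: one; rewrite adj_sym.
by have := closed_connect cl h; rewrite !inE connect0 => /esym.
Qed.

Lemma ncomp_rel :
  ncomp s t (@Q0A V) = (ncomp sB' tB' Q0B' + ~~ connect adjA v1 vn)%N.
Proof.
rewrite /ncomp /n_comp_mem.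
rewrite -(cardID C [predI roots adjA & mem (@Q0A V)]).
rewrite -(cardID C [predI roots adjB & mem Q0B']).
have e1 : #|[predI [predI roots adjA & mem (@Q0A V)] & C]| = (~~ connect adjA v1 vn).+1.
  rewrite -(n_comp_closure2 symA); apply: eq_card => x; rewrite !inE andbT.
  congr (_ && _); apply/idP/idP.
    by rewrite /C => /orP[] h; apply/pred0Pn; [exists v1|exists vn]; rewrite !inE h ?eqxx ?orbT.
  move=> /pred0Pn [y /andP[xy /pred2P [] e]]; have xy2 : connect adjA x y := xy; subst y; apply/orP; [left|right]; exact: xy2.
have e2 : #|[predI [predI roots adjB & mem Q0B'] & C]| = 1%N.
  rewrite -(n_comp_connect symB v1); apply: eq_card => x; rewrite !inE.
  case: (eqVneq x vn) => [->|xn] /=.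
    rewrite andbF; apply/esym/negP => /andP[_ h].
    by have := closed_connect vn_isolB h; rewrite !inE v1n eqxx.
  by rewrite andbT Claim2.
have e3 : #|[predD [predI roots adjB & mem Q0B'] & C]| =
          #|[predD [predI roots adjA & mem (@Q0A V)] & C]|.
  apply: eq_card => x; rewrite !inE andbT.
  case: (boolP (x \in C)) => //= nCx.
  have xn : x != vn by apply/eqP => ex; move: nCx; rewrite ex => /negP; apply; exact: C_vn.
  rewrite xn andbT /roots /fingraph.root.
  by rewrite (eq_pick (Claim1 nCx)).
rewrite e1 e2 e3; case: (connect adjA v1 vn) => /=; rewrite ?addn0 ?addn1 //.
Qed.

End Glue.

End PilotAux.
Import PilotAux.


Theorem proposition3p9 (k : fieldType) (V E : finType) (s t : E -> V)
    (Z : seq (seq E)) (v1 vn : V) (N : nat) :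
  monomial_relations s t Z ->
  bounded s t (@Q0A V) Z N ->
  v1 != vn -> non_isolated s t v1 -> non_isolated s t vn ->
  let dA := dimIm_delta0 s t k (@Q0A V) Z N in
  let dB := dimIm_delta0 (sB s v1 vn) (tB t v1 vn) k (Q0B vn)
              (ZB s t Z v1 vn) N in
  let cA := ncomp s t (@Q0A V) in
  let cB := ncomp (sB s v1 vn) (tB t v1 vn) (Q0B vn) in
  let spn := sp s t Z v1 vn k N in
  [/\ (dA%:Z = dB%:Z + 1 + cB%:Z - cA%:Z - spn%:Z)%R,
      connect (adj s t) v1 vn -> (dA%:Z = dB%:Z + 1 - spn%:Z)%R
    & ~~ connect (adj s t) v1 vn -> dA = dB].
Proof.
move=> [HZm _] Hb v1n [a1 _] _ dA dB cA cB spn.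
have HZ : forall r, r \in Z -> (2 <= size r)%N by move=> r /HZm [].
have HN : (0 < N)%N.
  case: (posnP N) => [N0|//]; exfalso.
  have := Hb (s a1, [:: a1]); rewrite /valid /= eqxx N0 => /(_ isT isT).
  by rewrite (avoids1 HZ).
have HZB : forall r, r \in ZB s t Z v1 vn -> (2 <= size r)%N.
  move=> r; rewrite mem_cat => /orP[/HZ //|/allpairsPdep [c [b [_ _ ->]]] //].
have HQA : forall a, (s a \in @Q0A V) && (t a \in @Q0A V) by [].
have HQB : forall a, (sB s v1 vn a \in Q0B vn) && (tB t v1 vn a \in Q0B vn).
  by move=> a; rewrite !inE /sB /tB !gl_neq_vn.
have iA := incidence k HQA HZ HN.
have iB := incidence k HQB HZB HN.
have ntB := ntB_eq s t Z N v1n k.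
have nc := ncomp_rel s t v1n.
have dAe := rank_split s t (@Q0A V) Z N k.
have dBe := rank_split (sB s v1 vn) (tB t v1 vn) (Q0B vn) (ZB s t Z v1 vn) N k.
have cardA : #|@Q0A V| = #|V| by apply: eq_card.
have cardB : (#|Q0B vn| + 1)%N = #|V|.
  rewrite /Q0B cardC1 addn1 prednK //; apply/card_gt0P; by exists v1.
have sp0 : ~~ connect (adj s t) v1 vn -> spn = 0%N.
  move=> nc0; rewrite /spn /sp (eq_in_count (a2 := pred0)) ?count_pred0 // => p pB /=.
  apply/negP => /andP[/andP[_ ends] _].
  move: pB; rewrite mem_basis /basisp /valid => /andP[/andP[/andP[_ cp] _] _].
  have := chain_connect cp; rewrite -/(tgt t p) /src in ends *.
  have symA := sym_connect_sym (@adj_sym V E s t).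
  case/orP: ends => /andP[/eqP -> /eqP ->] h; move: nc0; rewrite ?h //.
  by rewrite symA h.
have key : forall (dA dB trA ntA trB ntB sp cA cB nV nB : nat) (b : bool),
    dA = (trA + ntA)%N -> dB = (trB + ntB)%N -> ntB = (sp + ntA)%N ->
    (trA + cA)%N = nV -> (trB + cB)%N = nB -> (nB + 1)%N = nV -> cA = (cB + b)%N ->
    [/\ (dA%:Z = dB%:Z + 1 + cB%:Z - cA%:Z - sp%:Z)%R,
        b = false -> (dA%:Z = dB%:Z + 1 - sp%:Z)%R
      & b = true -> sp = 0%N -> dA = dB].
  move=> dA' dB' trA ntA trB ntB' sp' cA' cB' nV nB b e1 e2 e3 e4 e5 e6 e7.
  split.
  - by case: b e7 => /= e7; lia.
  - by move=> bf; rewrite bf /= in e7; lia.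
  - by move=> bt sp00; rewrite bt /= in e7; lia.
rewrite cardA in iA.
have [h1 h2 h3] := key _ _ _ _ _ _ _ _ _ _ _ _ dAe dBe ntB iA iB cardB nc.
split => //.
- by move=> con; apply: h2; rewrite con.
- by move=> ncon; apply: h3; [rewrite ncon | exact: sp0].
Qed.
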